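(* Let $\mathcal{L}$ be a lattice and assume a function $f$ (mapping finite subsets of $\mathcal{L}$ to finite subsets of $\mathcal{L}$) that is computable in time $O(t(n))$ on inputs of size $n$ and is such that $C(S)\subseteq f(S)$ for all finite $S\subseteq\mathcal{L}$. Then $C(S)$ can be computed in time $O\big(t(|S|)+|f(S)|\,|S|\big)$.
   Context: A lattice means a partially ordered set $(\mathcal{L},\sqsubseteq)$ with least element $\bot$ in which any two elements have a least upper bound $\sqcup$; $\bigsqcup S$ denotes the least upper bound of a finite set ($\bigsqcup\emptyset=\bot$). The closure set of a finite $S$ is $C(S)=\{\bigsqcup S' : S'\subseteq S\}$. Cost model: all lattice operations ($\sqsubseteq$, $\sqcup$, equality of elements) take constant time. *)

(* Defs.v *)
From HB Require Import structures.
From mathcomp Require Import all_boot all_order.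
From mathcomp Require Import finmap.

Set Implicit Arguments.
Unset Strict Implicit.
Unset Printing Implicit Defensive.

Import Order.TTheory.

(* A lattice in the paper's sense = poset with bottom and binary joins       *)
(* = bJoinSemilatticeType.                                                   *)
Section Closure.
Context {d : Order.disp_t} {T : bJoinSemilatticeType d}.
Local Open Scope fset_scope.

Definition bigjoin (S : {fset T}) : T :=
  \big[@Order.join d T / @Order.bottom d T]_(x <- S) x.

Definition closure_set (S : {fset T}) : {fset T} :=
  [fset bigjoin S' | S' in fpowerset S].
End Closure.

(* Cost model: a unit-cost random access machine over the lattice.          *)
(* It has nat registers, element registers, a nat memory and an element     *)
(* memory (all indexed by nat).  Lattice elements are only accessible        *)
(* through the lattice primitives (bottom, join, order test, equality test), *)
(* each costing one step, as every other instruction.                        *)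
Inductive instr : Type :=
  | NConst of nat & nat
  | NAdd of nat & nat & nat
  | NSub of nat & nat & nat
  | NLoad of nat & nat
  | NStore of nat & nat
  | EBot of nat
  | EJoin of nat & nat & nat
  | ELe of nat & nat & nat
  | EEq of nat & nat & nat
  | ELoad of nat & nat
  | EStore of nat & nat
  | Jz of nat & nat
  | Jmp of nat
  | Halt.

Definition program := seq instr.

Section Machine.
Context {d : Order.disp_t} {T : bJoinSemilatticeType d}.

Record state := State {
  pc : nat;
  nreg : nat -> nat;
  ereg : nat -> T;
  nmem : nat -> nat;
  emem : nat -> T
}.

Definition upd {A : Type} (f : nat -> A) (i : nat) (v : A) : nat -> A :=
  fun j => if j == i then v else f j.

(* One step; [None] means the machine has halted (Halt, or pc out of range). *)
Definition step (P : program) (st : state) : option state :=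
  let: State p nr er nm em := st in
  match nth Halt P p with
  | NConst r k => Some (State p.+1 (upd nr r k) er nm em)
  | NAdd r a b => Some (State p.+1 (upd nr r (nr a + nr b)) er nm em)
  | NSub r a b => Some (State p.+1 (upd nr r (nr a - nr b)) er nm em)
  | NLoad r a => Some (State p.+1 (upd nr r (nm (nr a))) er nm em)
  | NStore a r => Some (State p.+1 nr er (upd nm (nr a) (nr r)) em)
  | EBot e => Some (State p.+1 nr (upd er e (@Order.bottom d T)) nm em)
  | EJoin e a b => Some (State p.+1 nr (upd er e (@Order.join d T (er a) (er b))) nm em)
  | ELe r a b => Some (State p.+1 (upd nr r (nat_of_bool (@Order.le d T (er a) (er b)))) er nm em)
  | EEq r a b => Some (State p.+1 (upd nr r (nat_of_bool (er a == er b))) er nm em)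
  | ELoad e a => Some (State p.+1 nr (upd er e (em (nr a))) nm em)
  | EStore a e => Some (State p.+1 nr er nm (upd em (nr a) (er e)))
  | Jz r l => Some (State (if nr r == 0 then l else p.+1) nr er nm em)
  | Jmp l => Some (State l nr er nm em)
  | Halt => None
  end.

Fixpoint halts_in (P : program) (k : nat) (st st' : state) : Prop :=
  match k with
  | 0 => step P st = None /\ st' = st
  | k'.+1 => exists st1, step P st = Some st1 /\ halts_in P k' st1 st'
  end.

(* Input convention: a finite set is given as a duplicate-free list s;
   R[0] = size s and EM[0 .. size s - 1] = s; everything else is 0 / bottom. *)
Definition init_state (s : seq T) : state :=
  State 0 (upd (fun _ => 0) 0 (size s)) (fun _ => @Order.bottom d T)
        (fun _ => 0) (fun i => nth (@Order.bottom d T) s i).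

(* Output convention: R[0] = m and EM[0 .. m-1] is a duplicate-free list. *)
Definition output (st : state) : seq T := mkseq (emem st) (nreg st 0).

Definition computes_within (P : program) (F : {fset T} -> {fset T})
    (B : {fset T} -> nat) : Prop :=
  forall s : seq T, uniq s ->
    exists k st', k <= B [fset x | x in s]%fset /\ halts_in P k (init_state s) st' /\
      uniq (output st') /\ [fset x | x in output st']%fset = F [fset x | x in s]%fset.

End Machine.

(* Main.v *)
Require Import Defs.
From mathcomp Require Import all_boot all_order.
From mathcomp Require Import finmap.
From mathcomp Require Import zify.
Set Implicit Arguments. Unset Strict Implicit. Unset Printing Implicit Defensive.
Import Order.TTheory.

Section Gen.
Context {d : Order.disp_t} {T : bJoinSemilatticeType d}.
Local Notation state := (@state d T).

Fixpoint runs (P : program) (k : nat) (st st' : state) : Prop :=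
  match k with
  | 0 => st' = st
  | k'.+1 => exists st1, step P st = Some st1 /\ runs P k' st1 st'
  end.

Lemma runs_trans P k1 k2 st1 st2 st3 :
  runs P k1 st1 st2 -> runs P k2 st2 st3 -> runs P (k1 + k2) st1 st3.
Proof.
elim: k1 st1 => [|k IH] st1 /=; first by move=> ->.
by move=> [s [Hs Hr]] H2; exists s; split=> //; apply: IH Hr H2.
Qed.

Lemma halts_runs P k st st' : halts_in P k st st' <-> runs P k st st' /\ step P st' = None.
Proof.
elim: k st => [|k IH] st /=.
  by split=> [[H ->]|[-> H]].
split=> [[s [Hs /IH [Hr Hn]]]|[[s [Hs Hr]] Hn]]; first by split=> //; exists s.
by exists s; split=> //; apply/IH.
Qed.

Definition reach P st st' B := exists k, k <= B /\ runs P k st st'.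

Lemma reach_trans P st1 st2 st3 B1 B2 :
  reach P st1 st2 B1 -> reach P st2 st3 B2 -> reach P st1 st3 (B1 + B2).
Proof.
move=> [k1 [H1 R1]] [k2 [H2 R2]]; exists (k1 + k2); split; first lia.
exact: runs_trans R1 R2.
Qed.

Lemma reach0 P st : reach P st st 0.
Proof. by exists 0. Qed.

Lemma reach_step P st st1 st' B :
  step P st = Some st1 -> reach P st1 st' B -> reach P st st' B.+1.
Proof. by move=> H [k [Hk R]]; exists k.+1; split=> //; exists st1. Qed.

Lemma reach_mono P st st' B B' : B <= B' -> reach P st st' B -> reach P st st' B'.
Proof. by move=> HB [k [Hk R]]; exists k; split=> //; lia. Qed.

Lemma runs_emem P k st st' (A : seq T) :
  runs P k st st' -> (forall q, emem st q \in A) ->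
  exists L : seq T, size L <= k /\ forall q, emem st' q \in A ++ L.
Proof.
elim: k st A => [|k IH] st A /=.
  by move=> -> H; exists [::]; split=> // q; rewrite cats0.
move=> [s [Hs Hr]] HA.
have [HB|[v HB]] : (forall q, emem s q \in A) \/ exists v, forall q, emem s q \in A ++ [:: v].
  move: Hs; case: st HA => p nr er nm em /= HA; rewrite /step.
  case: (nth Halt P p) => [||||||||||a e|||] //; intros;
  match goal with H: Some _ = Some _ |- _ => case: H => <- end; try by left.
  right; exists (er e) => q; rewrite /upd /=; case: (q == nr a).
    by rewrite mem_cat mem_seq1 eqxx orbT.
  by rewrite mem_cat HA.
- have [L [HL HL']] := IH _ _ Hr HB; exists L; split=> //; lia.
- have [L [HL HL']] := IH _ _ Hr HB; exists (v :: L); split=> /=; first lia.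
  by move=> q; move: (HL' q); rewrite -catA.
Qed.

End Gen.

Section RE.
Context {d : Order.disp_t} {T : bJoinSemilatticeType d}.
Local Notation state := (@state d T).
Definition RE (P : program) (st : state) (B : nat) (Q : state -> Prop) :=
  exists st' k, k <= B /\ runs P k st st' /\ Q st'.

Lemma RE_step P st st1 B Q : step P st = Some st1 -> RE P st1 B Q -> RE P st B.+1 Q.
Proof. by move=> H [s [k [Hk [R Hq]]]]; exists s, k.+1; split=> //; split=> //; exists st1. Qed.

Lemma RE_step' P st st1 B Q : step P st = Some st1 -> 0 < B -> RE P st1 (B - 1) Q -> RE P st B Q.
Proof.
move=> H HB [s [k [Hk [R Hq]]]]; exists s, k.+1; split; first lia.
by split=> //; exists st1.
Qed.

Lemma RE_mono P st B B' Q : B <= B' -> RE P st B Q -> RE P st B' Q.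
Proof. by move=> HB [s [k [Hk [R Hq]]]]; exists s, k; split=> //; lia. Qed.

Lemma RE_now P st Q : Q st -> RE P st 0 Q.
Proof. by move=> Hq; exists st, 0. Qed.

Lemma RE_seq P st B1 B2 Q1 Q : RE P st B1 Q1 -> (forall s, Q1 s -> RE P s B2 Q) ->
  RE P st (B1 + B2) Q.
Proof.
move=> [s [k [Hk [R Hq]]]] /(_ s Hq) [s' [k' [Hk' [R' Hq']]]].
exists s', (k + k'); split; first lia. by split=> //; apply: runs_trans R R'.
Qed.

Lemma RE_imp P st B Q Q' : (forall s, Q s -> Q' s) -> RE P st B Q -> RE P st B Q'.
Proof. by move=> HQ [s [k [Hk [R Hq]]]]; exists s, k; split=> //; split=> //; apply: HQ. Qed.
End RE.

Section Math.
Local Open Scope fset_scope.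
Context {d : Order.disp_t} {T : bJoinSemilatticeType d}.

Definition Jy (s : seq T) (y : T) : T := \big[@Order.join d T/@Order.bottom d T]_(x <- s | (x <= y)%O) x.

Lemma Jy_le s y : (Jy s y <= y)%O.
Proof. by apply: joins_le. Qed.

Lemma clos_mem (s : seq T) (y : T) :
  (y \in closure_set [fset x | x in s]) = (y == Jy s y).
Proof.
apply/idP/idP.
- case/imfsetP=> S' /=; rewrite fpowersetE => /fsubsetP HS Hy.
  rewrite eq_le Jy_le andbT {1}Hy.
  apply/joinsP_seq => x Hx _; apply: joins_sup_seq.
    by move: (HS x Hx); rewrite inE.
  by rewrite Hy; apply: joins_sup_seq.
- move=> /eqP Hy; apply/imfsetP; exists [fset x | x in s & (x <= y)%O] => /=.
    by rewrite fpowersetE; apply/fsubsetP => x; rewrite !inE => /andP [].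
  rewrite {1}Hy; apply/eqP; rewrite eq_le; apply/andP; split.
    apply/joinsP_seq => x Hx Hxy; apply: joins_sup_seq => //.
    by rewrite !inE Hx Hxy.
  apply/joinsP_seq => x; rewrite !inE => /andP [Hx Hxy] _.
  exact: joins_sup_seq.
Qed.
End Math.

Section Ph3.
Context {d : Order.disp_t} {T : bJoinSemilatticeType d}.
Local Notation state := (@state d T).
Local Notation bot := (@Order.bottom d T).
Local Notation join := (@Order.join d T).
Variables (P : program) (H X : nat) (s : seq T).
Hypothesis X0 : 0 < X.

Definition ph3 : program := [::
 (* 0 *) NConst (3+X) 1; NConst (4+X) 0; NAdd (5+X) 0 (4+X); NAdd (6+X) 0 (4+X);
 (* 4 *) NLoad (7+X) (3+X); Jz (6+X) (24+H); NSub (6+X) (6+X) (3+X); NAdd (2+X) (6+X) (6+X);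
 (* 8 *) ELoad (1+X) (2+X); EBot (2+X); NAdd (1+X) (7+X) (4+X); Jz (1+X) (20+H);
 (* 12 *) NSub (1+X) (1+X) (3+X); NAdd (2+X) (1+X) (1+X); NAdd (2+X) (2+X) (3+X); ELoad (3+X) (2+X);
 (* 16 *) ELe (8+X) (3+X) (1+X); Jz (8+X) (11+H); EJoin (2+X) (3+X) (2+X); Jmp (11+H);
 (* 20 *) EEq (8+X) (2+X) (1+X); NAdd (2+X) (6+X) (6+X); NStore (2+X) (8+X); Jmp (5+H);
 (* 24 *) NConst (9+X) 0; NConst (6+X) 0; NSub (10+X) (5+X) (6+X); Jz (10+X) (36+H);
 (* 28 *) NAdd (2+X) (6+X) (6+X); NLoad (8+X) (2+X); Jz (8+X) (34+H); ELoad (1+X) (2+X);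
 (* 32 *) EStore (9+X) (1+X); NAdd (9+X) (9+X) (3+X); NAdd (6+X) (6+X) (3+X); Jmp (26+H);
 (* 36 *) NAdd 0 (9+X) (4+X); Halt; NConst 0 1; Halt].

Hypothesis nthP : forall k, nth Halt P (k + H) = nth Halt ph3 k.

Lemma reg0F k : (0 == k + X) = false.
Proof. by apply/eqP; lia. Qed.
Lemma reg0F' k : (k + X == 0) = false.
Proof. by apply/eqP; lia. Qed.

Ltac stp := eapply RE_step'; [rewrite /step nthP /=; reflexivity|lia|]; rewrite -?addSn.
Ltac simp := rewrite /upd ?eqn_add2r ?reg0F ?reg0F' /=.

Definition JJ (i : nat) (y : T) := \big[join/bot]_(i <= q < size s | (nth bot s q <= y)%O) nth bot s q.

Lemma inner i nr er nm em y :
  i <= size s -> nr (1+X) = i -> nr (3+X) = 1 -> er (1+X) = y ->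
  er (2+X) = JJ i y ->
  (forall q, q < size s -> em (q+q+1) = nth bot s q) ->
  RE P (State (11+H) nr er nm em) (9*i+1) (fun st => pc st = 20+H /\ nmem st = nm /\ emem st = em /\
     ereg st (2+X) = JJ 0 y /\ ereg st (1+X) = y /\
     forall r, r != 1+X -> r != 2+X -> r != 8+X -> nreg st r = nr r).
Proof.
elim: i nr er => [|i IH] nr er Hi HI H1 HY HA Hs.
  apply: (RE_mono (B := 1)); first lia.
  stp. rewrite HI /=. apply: RE_now => /=. 
  by do 5 (split => //); rewrite -HA.
stp. rewrite HI /=. stp. stp. stp. stp. stp. stp. simp.
rewrite HI H1 HY subn1 /= Hs //.
have Hrec : JJ i y = if (nth bot s i <= y)%O then join (nth bot s i) (JJ i.+1 y) else JJ i.+1 y.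
  by rewrite /JJ big_ltn_cond.
case E: (nth bot s i <= y)%O => /=.
- stp. stp. 
  apply: (RE_mono (B := 9*i+1)); first lia.
  eapply RE_imp; last (eapply IH; simp).
  + move=> st [-> [-> [-> [-> [-> Hf]]]]]; do 5 split=> //.
    move=> r r1 r2 r8; rewrite Hf //; simp.
    by rewrite (negbTE r1) (negbTE r2) (negbTE r8).
  + lia.
  + by [].
  + by [].
  + by [].
  + by rewrite Hrec E HA.
  + by [].
- apply: (RE_mono (B := 9*i+1)); first lia.
  eapply RE_imp; last (eapply IH; simp).
  + move=> st [-> [-> [-> [-> [-> Hf]]]]]; do 5 split=> //.
    move=> r r1 r2 r8; rewrite Hf //; simp.
    by rewrite (negbTE r1) (negbTE r2) (negbTE r8).
  + lia.
  + by [].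
  + by [].
  + by [].
  + by rewrite Hrec E HA.
  + by [].
Qed.

Definition flag (em : nat -> T) j := nat_of_bool (JJ 0 (em (j+j)) == em (j+j)).

Lemma JJn y : JJ (size s) y = bot.
Proof. by rewrite /JJ big_geq. Qed.

Lemma outer J nr er nm em m :
 J <= m -> nr (6+X) = J -> nr (3+X) = 1 -> nr (4+X) = 0 -> nr (7+X) = size s -> nr (5+X) = m ->
 (forall q, q < size s -> em (q+q+1) = nth bot s q) ->
 (forall j, J <= j < m -> nm (j+j) = flag em j) ->
 RE P (State (5+H) nr er nm em) (J*(9*size s + 11) + 1)
   (fun st => pc st = 24+H /\ emem st = em /\ nreg st (3+X) = 1 /\ nreg st (4+X) = 0 /\
      nreg st (5+X) = m /\ forall j, j < m -> nmem st (j+j) = flag em j).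
Proof.
elim: J nr er nm => [|J IH] nr er nm HJ HJr H1 H0 Hn Hm Hs Hf.
  apply: (RE_mono (B := 1)); first lia.
  stp. rewrite HJr /=. apply: RE_now => /=; do 5 split=> //.
stp. rewrite HJr /=. stp. stp. stp. stp. stp.
apply: (RE_mono (B := (9*size s+1) + (4 + (J*(9*size s+11)+1)))); first nia.
apply: RE_seq.
  apply: inner => //; simp; rewrite ?HJr ?Hn ?H0 ?H1 ?addn0 //.
  by rewrite JJn.
move=> [p2 nr2 er2 nm2 em2] /= [-> [-> [-> [HA [HY Hfr]]]]].
move: HA HY; simp; rewrite HJr H1 subn1 /= => HA HY.
have HJ2 : nr2 (6+X) = J by rewrite Hfr ?eqn_add2r //; simp; rewrite HJr H1 subn1.
have H12 : nr2 (3+X) = 1 by rewrite Hfr ?eqn_add2r //; simp.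
have H02 : nr2 (4+X) = 0 by rewrite Hfr ?eqn_add2r //; simp.
have Hn2 : nr2 (7+X) = size s by rewrite Hfr ?eqn_add2r //; simp.
have Hm2 : nr2 (5+X) = m by rewrite Hfr ?eqn_add2r //; simp.
stp. stp. stp. stp.
apply: (RE_mono (B := J*(9*size s+11)+1)); first lia.
eapply RE_imp; last (eapply IH; simp).
- by [].
- lia.
- by [].
- by [].
- by [].
- by [].
- by [].
- by [].
- move=> j /andP [Hj1 Hj2]. rewrite HJ2 HA HY.
  case: (eqVneq j J) => [->|Hne]; first by rewrite eqxx.
  have -> : (j + j == J + J) = false by apply/eqP; lia.
  apply: Hf; lia.
Qed.

Definition fl (em : nat -> T) j := JJ 0 (em (j+j)) == em (j+j).
Definition Cs (em : nat -> T) j0 := [seq em (j+j) | j <- iota 0 j0 & fl em j].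

Lemma CsS em j0 : Cs em j0.+1 = Cs em j0 ++ (if fl em j0 then [:: em (j0+j0)] else [::]).
Proof. by rewrite /Cs -addn1 iotaD filter_cat map_cat /=; case: (fl em j0). Qed.

Lemma size_Cs em j0 : size (Cs em j0) <= j0.
Proof. by rewrite size_map size_filter (leq_trans (count_size _ _)) // size_iota. Qed.

Lemma pass2 r j0 w nr er nm em em0 m :
 j0 + r = m -> nr (5+X) = m -> nr (6+X) = j0 -> nr (3+X) = 1 -> nr (4+X) = 0 -> nr (9+X) = w ->
 w = size (Cs em0 j0) ->
 (forall j, j < m -> nm (j+j) = flag em0 j) ->
 (forall q, q < w -> em q = nth bot (Cs em0 j0) q) ->
 (forall j, j0 <= j < m -> em (j+j) = em0 (j+j)) ->
 RE P (State (26+H) nr er nm em) (10*r+3) (fun st => pc st = 37+H /\ nreg st 0 = size (Cs em0 m) /\ forall q, q < size (Cs em0 m) -> emem st q = nth bot (Cs em0 m) q).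
Proof.
elim: r j0 w nr er em => [|r IH] j0 w nr er em Hr Hm HJ H1 H0 HW Hw Hnm Hem Hrest.
  rewrite addn0 in Hr; rewrite Hr in HJ Hw Hem Hrest.
  stp. stp. simp. rewrite Hm HJ subnn /=. stp. apply: RE_now => /=.
  by split=> //; simp; rewrite HW H0 addn0 -Hw; split.
stp. stp. simp. rewrite Hm HJ.
have -> : (m - j0 == 0) = false by apply/eqP; lia.
stp. stp. simp. rewrite HJ Hnm; last lia.
have Hwj := size_Cs em0 j0.
stp. simp. rewrite (_ : flag em0 j0 = fl em0 j0) //.
case E: (fl em0 j0) => /=.
- stp. stp. stp. stp. stp.
  apply: (RE_mono (B := 10*r+3)); first lia.
  apply: (IH j0.+1 w.+1); simp; rewrite ?Hm ?HJ ?H1 ?H0 ?HW ?addn1 //; try lia.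
  + by rewrite CsS E cats1 size_rcons -Hw.
  + move=> q Hq; rewrite CsS E.
    case: (eqVneq q w) => [->|Hne].
      rewrite nth_cat -Hw ltnn subnn /= Hrest //; lia.
    rewrite Hem; last lia.
    by rewrite nth_cat -Hw (_ : q < w) //; lia.
  + move=> j Hj.
    have -> : (j + j == w) = false by apply/eqP; lia.
    apply: Hrest; lia.
- stp. stp.
  apply: (RE_mono (B := 10*r+3)); first lia.
  apply: (IH j0.+1 w); simp; rewrite ?Hm ?HJ ?H1 ?H0 ?HW ?addn1 //; try lia.
  + by rewrite CsS E cats0.
  + by move=> q Hq; rewrite CsS E cats0; apply: Hem.
  + move=> j Hj; apply: Hrest; lia.
Qed.

Lemma ph3_main nr er nm em m :
 nm 1 = size s -> nr 0 = m -> (forall q, q < size s -> em (q+q+1) = nth bot s q) ->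
 RE P (State (0+H) nr er nm em) (5 + (m*(9*size s+11)+1) + (2 + (10*m+3)))
   (fun st => pc st = 37+H /\ nreg st 0 = size (Cs em m) /\
      forall q, q < size (Cs em m) -> emem st q = nth bot (Cs em m) q).
Proof.
move=> Hn Hm Hs.
stp. stp. stp. stp. stp.
apply: (RE_mono (B := (m*(9*size s+11)+1) + (2 + (10*m+3)))); first lia.
apply: RE_seq.
  apply: (@outer m _ _ _ em m); simp; rewrite ?Hm ?Hn ?addn0 //. by move=> j; lia.
move=> [p2 nr2 er2 nm2 em2] /= [-> [-> [H12 [H02 [Hm2 Hf2]]]]].
stp. stp.
apply: (RE_mono (B := 10*m+3)); first lia.
apply: (@pass2 m 0 0 _ _ _ _ em m); simp; rewrite ?H12 ?H02 ?Hm2 //.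
Qed.
End Ph3.

Section Setup.
Context {d : Order.disp_t} {T : bJoinSemilatticeType d}.
Local Notation state := (@state d T).
Local Notation bot := (@Order.bottom d T).
Variables (P : program) (H X : nat) (s : seq T).
Hypothesis X0 : 0 < X.

Definition setup : program := [::
 (* 0 *) Jz 0 (38+H); NConst (3+X) 1; NStore (3+X) 0; NAdd (1+X) 0 (4+X);
 (* 4 *) Jz (1+X) 12; NSub (1+X) (1+X) (3+X); ELoad X (1+X); NAdd (2+X) (1+X) (1+X);
 (* 8 *) EStore (2+X) X; NAdd (2+X) (2+X) (3+X); EStore (2+X) X; Jmp 4].

Hypothesis nthS : forall k, k < 12 -> nth Halt P k = nth Halt setup k.

Ltac stp := eapply RE_step'; [rewrite /step nthS //=; reflexivity|lia|].
Ltac simp := rewrite /upd ?eqxx ?eqn_add2r ?(reg0F' X0) ?(reg0F X0) /=.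

Lemma regltF j k : j < X -> (j == k + X) = false.
Proof. by move=> h; apply/eqP; lia. Qed.

Lemma setup_loop i nr er nm em :
  i <= size s -> nr (1+X) = i -> nr (3+X) = 1 ->
  (forall q, q < i -> em q = nth bot s q) ->
  (forall j, i <= j -> em (j+j) = nth bot s j /\ em (j+j+1) = nth bot s j) ->
  RE P (State 4 nr er nm em) (8*i+1) (fun st => pc st = 12 /\ nmem st = nm /\
     (forall j, j < X -> nreg st j = nr j) /\ (forall j, j < X -> ereg st j = er j) /\
     (forall j, emem st (j+j) = nth bot s j /\ emem st (j+j+1) = nth bot s j)).
Proof.
elim: i nr er em => [|i IH] nr er em Hi HI H1 Hlo Hhi.
  apply: (RE_mono (B := 1)); first lia.
  stp. rewrite HI /=. apply: RE_now => /=; do 4 split=> //.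
  by move=> j; apply: Hhi.
stp. rewrite HI /=. stp. stp. stp. stp. stp. stp. stp.
apply: (RE_mono (B := 8*i+1)); first lia.
eapply RE_imp; last (apply: IH; simp; rewrite ?HI ?H1 ?subn1 //=).
- move=> st [-> [-> [Hn [He Hm]]]]; split; first done; split; first done.
  split; last split; last done.
  + by move=> j Hj; rewrite Hn //; simp; rewrite !regltF.
  + move=> j Hj; rewrite He //; simp.
    by rewrite (_ : (j == X) = false) //; apply/eqP; lia.
- lia.
- move=> q Hq.
  rewrite (_ : (q == i + i + 1) = false); last by apply/eqP; lia.
  rewrite (_ : (q == i + i) = false); last by apply/eqP; lia.
  apply: Hlo; lia.
- have Hei : em i = nth bot s i by apply: Hlo.
  move=> j Hj; case: (eqVneq j i) => [->|Hne].
    by rewrite !eqxx Hei; case: ifP.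
  rewrite (_ : (j + j == i + i + 1) = false); last by apply/eqP; lia.
  rewrite (_ : (j + j == i + i) = false); last by apply/eqP; lia.
  rewrite (_ : (j + j + 1 == i + i + 1) = false); last by apply/eqP; lia.
  rewrite (_ : (j + j + 1 == i + i) = false); last by apply/eqP; lia.
  apply: Hhi; lia.
Qed.


Lemma setup_main : 0 < size s ->
  RE P (init_state s) (4 + (8*size s+1)) (fun st => pc st = 12 /\
    (forall j, j < X -> nreg st j = nreg (init_state s) j) /\
    (forall j, j < X -> ereg st j = bot) /\
    (forall j, nmem st (j+j) = 0) /\ nmem st 1 = size s /\
    (forall j, emem st (j+j) = nth bot s j /\ emem st (j+j+1) = nth bot s j)).
Proof.
move=> Hs; rewrite /init_state.
stp. simp. rewrite (_ : (size s == 0) = false); last by apply/eqP; lia.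
stp. stp. stp.
apply: (RE_mono (B := 8*size s+1)); first lia.
eapply RE_imp; last (apply: (@setup_loop (size s)); simp => //).
- move=> st [-> [-> [Hn [He Hm]]]]; split; first done.
  split; first by move=> j Hj; rewrite Hn //; simp; rewrite !regltF.
  split; first by move=> j Hj; rewrite He.
  split. by move=> j; simp; rewrite (_ : (j + j == 1) = false) //; apply/eqP; lia.
  split. by simp.
  exact: Hm.
- by rewrite addn0.
- by move=> j Hj; rewrite !nth_default //; lia.
Qed.
End Setup.

Section Main.
Context {d : Order.disp_t} {T : bJoinSemilatticeType d}.
Local Notation state := (@state d T).
Local Notation bot := (@Order.bottom d T).
Variable Pf : program.

Definition maxidx (i : instr) : nat :=
  match i with
  | NConst r _ => r
  | NAdd r a b | NSub r a b | EJoin r a b | ELe r a b | EEq r a b => maxn r (maxn a b)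
  | NLoad r a | NStore r a | ELoad r a | EStore r a => maxn r a
  | EBot e => e
  | Jz r _ => r
  | Jmp _ | Halt => 0
  end.

Definition X := (foldr maxn 0 (map maxidx Pf)).+1.
Definition H := 12 + 2 * size Pf.
Definition tgt l := 12 + 2 * minn l (size Pf).

Definition tr (i : instr) (b : bool) : instr :=
  match i with
  | NLoad r a => if b then NLoad r X else NAdd X a a
  | NStore a r => if b then NStore X r else NAdd X a a
  | ELoad e a => if b then ELoad e X else NAdd X a a
  | EStore a e => if b then EStore X e else NAdd X a a
  | Jz r l => if b then Jz r (tgt l) else NConst X 0
  | Jmp l => if b then Jmp (tgt l) else NConst X 0
  | Halt => if b then Jmp H else NConst X 0
  | i => if b then i else NConst X 0
  end.

Definition sim : program := mkseq (fun q => tr (nth Halt Pf q./2) (odd q)) (2 * size Pf).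
Definition Pm : program := setup H X ++ sim ++ ph3 H X.

Lemma X0 : 0 < X. Proof. by []. Qed.

Lemma maxidx_lt p : maxidx (nth Halt Pf p) < X.
Proof.
case: (ltnP p (size Pf)) => Hp; last by rewrite nth_default.
rewrite /X ltnS.
elim: Pf p Hp => [|i l IH] [|p] //= Hp; first exact: leq_maxl.
by apply: leq_trans (IH p Hp) (leq_maxr _ _).
Qed.

Lemma nthS k : k < 12 -> nth Halt Pm k = nth Halt (setup H X) k.
Proof. by move=> Hk; rewrite /Pm nth_cat /= Hk. Qed.

Lemma nth_sim q : q < 2 * size Pf -> nth Halt Pm (12 + q) = tr (nth Halt Pf q./2) (odd q).
Proof.
move=> Hq; rewrite /Pm nth_cat /= addKn nth_cat size_mkseq Hq.
by rewrite nth_mkseq.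
Qed.

Lemma nth_sim0 p : p < size Pf -> nth Halt Pm (12 + 2 * p) = tr (nth Halt Pf p) false.
Proof.
move=> Hp; rewrite nth_sim; last lia.
by rewrite mul2n doubleK odd_double.
Qed.

Lemma nth_sim1 p : p < size Pf -> nth Halt Pm (12 + 2 * p).+1 = tr (nth Halt Pf p) true.
Proof.
move=> Hp; rewrite -addnS nth_sim; last lia.
by rewrite mul2n /= uphalf_double odd_double.
Qed.

Lemma nthPm k : nth Halt Pm (k + H) = nth Halt (ph3 H X) k.
Proof.
rewrite /Pm nth_cat /= ltnNge (_ : 12 <= k + H); last by rewrite /H; lia.
rewrite /= nth_cat size_mkseq ltnNge (_ : 2 * size Pf <= k + H - 12); last by rewrite /H; lia.
by congr nth; rewrite /H; lia.
Qed.


Opaque Pm.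

Definition relD (n : nat) (s : seq T) (st st' : state) :=
 (forall j, j < X -> nreg st' j = nreg st j) /\ (forall j, j < X -> ereg st' j = ereg st j) /\
 (forall j, nmem st' (j+j) = nmem st j) /\ (forall j, emem st' (j+j) = emem st j) /\
 nmem st' 1 = n /\ (forall j, j < n -> emem st' (j+j+1) = nth bot s j).

Definition rel n s (st st' : state) := pc st' = 12 + 2 * minn (pc st) (size Pf) /\ relD n s st st'.

Lemma eqXF j : j < X -> (j == X) = false.
Proof. exact: ltn_eqF. Qed.

Lemma updM (A : Type) (m' m : nat -> A) a v :
  (forall j, m' (j+j) = m j) -> forall j, upd m' (a+a) v (j+j) = upd m a v j.
Proof.
move=> Hm j; rewrite /upd Hm; congr (if _ then _ else _).
by apply/eqP/eqP; lia.
Qed.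

Lemma updO (A : Type) (m' : nat -> A) a v j : upd m' (a+a) v (j+j+1) = m' (j+j+1).
Proof. by rewrite /upd (_ : (j + j + 1 == a + a) = false) //; apply/eqP; lia. Qed.

Lemma upd1 (A : Type) (m' : nat -> A) a v : upd m' (a+a) v 1 = m' 1.
Proof. by rewrite /upd (_ : (1 == a + a) = false) //; apply/eqP; lia. Qed.

Lemma dbl_eq j a : (j + j == a + a) = (j == a).
Proof. by apply/eqP/eqP; lia. Qed.
Lemma odd_neq j a : (j + j + 1 == a + a) = false.
Proof. by apply/eqP; lia. Qed.
Lemma one_neq a : (1 == a + a) = false.
Proof. by apply/eqP; lia. Qed.

Ltac crush :=
  rewrite /upd ?eqxx /=;
  repeat match goal with
  | h : is_true (?x < X) |- context [?x == X] => rewrite (eqXF h)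
  end; rewrite ?dbl_eq ?odd_neq ?one_neq.

Lemma sim_step n s st st1 st' : step Pf st = Some st1 -> rel n s st st' ->
  exists st1', runs Pm 2 st' st1' /\ rel n s st1 st1'.
Proof.
case: st => p nr er nm em; case: st' => p' nr' er' nm' em' /=.
case: (ltnP p (size Pf)) => Hp; last by rewrite /step nth_default.
move=> Hst [/= Hpc [/= Hn [/= He [/= Hnm [/= Hem [/= H1 Hodd]]]]]].
rewrite (minn_idPl (ltnW Hp)) in Hpc; subst p'.
have Hok := maxidx_lt p.
move: Hst; rewrite /step.
case Ei: (nth Halt Pf p) Hok => [r k|r a b|r a b|r a|a r|e|e a b|r a b|r a b|e a|a e|r l|l|] /= Hok // [<-].
all: eexists; split; [ do 2 (eexists; split; [rewrite /step /= ?nth_sim0 ?nth_sim1 // Ei /=; reflexivity| ]); reflexivity | ].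
all: rewrite ?gtn_max in Hok; repeat match goal with h : is_true (_ && _) |- _ => case/andP: h => ? h end.
all: rewrite /rel /relD /=.
all: split; [ | split; [move=> j Hj; crush | split; [move=> j Hj; crush | split; [move=> j; crush | split; [move=> j; crush | split; [crush | move=> j Hj; crush]]]]]].
all: rewrite ?Hn ?He ?Hnm ?Hem ?H1 ?Hodd //.
all: try by rewrite (minn_idPl Hp); lia.
all: try by [].
rewrite /upd (eqXF Hok) Hn //; case: (nr r == 0) => //; rewrite (minn_idPl Hp); lia.
Qed.


Lemma RE_runs (P : program) k (st st1 : state) B Q : runs P k st st1 -> RE P st1 B Q -> RE P st (k + B) Q.
Proof.
move=> R [s' [k' [Hk [R' Hq]]]]; exists s', (k + k'); split; first lia.
by split=> //; apply: runs_trans R R'.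
Qed.

Lemma sim_halt n s st st' : step Pf st = None -> rel n s st st' ->
  RE Pm st' 2 (fun st'' => pc st'' = H /\ relD n s st st'').
Proof.
case: st => p nr er nm em; case: st' => p' nr' er' nm' em' /=.
move=> Hst [/= Hpc HD].
case: (ltnP p (size Pf)) => Hp; last first.
  apply: (RE_mono (B := 0)) => //; apply: RE_now => /=; split=> //.
  by rewrite Hpc (minn_idPr Hp).
rewrite (minn_idPl (ltnW Hp)) in Hpc; subst p'.
have Ei : nth Halt Pf p = Halt.
  by move: Hst; rewrite /step; case: (nth Halt Pf p).
eapply RE_step'; [rewrite /step /= nth_sim0 // Ei /=; reflexivity | done | ].
eapply RE_step'; [rewrite /step /= nth_sim1 // Ei /=; reflexivity | done | ].
apply: RE_now => /=; split=> //.
case: HD => /= [Hn HD]; split=> // j Hj.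
by rewrite /= /upd (eqXF Hj) Hn.
Qed.

Lemma sim_run n s k st stf st' : halts_in Pf k st stf -> rel n s st st' ->
  RE Pm st' (2 * k + 2) (fun st'' => pc st'' = H /\ relD n s stf st'').
Proof.
elim: k st st' => [|k IH] st st' /=.
  by move=> [Hn ->] Hr; apply: sim_halt.
move=> [st1 [Hs Hh]] Hr.
have [st1' [R Hr1]] := sim_step Hs Hr.
rewrite (_ : 2 * k.+1 + 2 = 2 + (2 * k + 2)); last lia.
exact: RE_runs R (IH _ _ Hh Hr1).
Qed.

End Main.

Opaque Pm.
Lemma JJ0 d (T : bJoinSemilatticeType d) (s : seq T) y : JJ s 0 y = Jy s y.
Proof. by rewrite /JJ /Jy (big_nth (@Order.bottom d T)). Qed.

Unset Implicit Arguments.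
Local Open Scope fset_scope.

Theorem mainTheorem15 (d : Order.disp_t) (T : bJoinSemilatticeType d)
    (f : {fset T} -> {fset T}) (t : nat -> nat) (Pf : program) (c : nat) :
  computes_within Pf f (fun S => c * (t #|` S| + 1)) ->
  (forall S : {fset T}, closure_set S `<=` f S) ->
  exists (P : program) (c' : nat),
    computes_within P (@closure_set d T)
      (fun S => c' * (t #|` S| + #|` f S| * #|` S| + 1)).
Proof.
move=> HPf Hcl; exists (Pm Pf), (2 * c + 50)%N => s Us.
have cardS : #|` [fset x | x in s]| = size s by rewrite card_fseq undup_id.
have bot_cl : forall s0 : seq T, (@Order.bottom d T) \in closure_set [fset x | x in s0].
  move=> s0; rewrite clos_mem eq_le le0x /=; exact: Jy_le.
case: (posnP (size s)) => Hn.
  have s0 : s = [::] by apply/eqP; rewrite -size_eq0 Hn.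
  subst s.
  exists 2; eexists; split; last split.
  - by rewrite cardS /=; nia.
  - eexists; split; [rewrite /step /= nthS // /=; reflexivity|].
    eexists; split; [rewrite /step /= (nthPm Pf 38) /=; reflexivity|].
    split; last reflexivity.
    by rewrite /step /= (nthPm Pf 39).
  - split=> //. apply/fsetP => y.
    rewrite /output /= clos_mem /Jy big_nil !inE.
    by rewrite orbF.
have [k [stf [Hk [Hh [UF EF]]]]] := HPf s Us.
rewrite cardS in Hk.
set F := output stf in UF EF.
set m := nreg stf 0.
have sizeF : size F = m by rewrite /F /output size_mkseq.
set Cf := [seq y <- F | Jy s y == y].
have R : RE (Pm Pf) (init_state s)
  ((4 + (8 * size s + 1)) + ((2*k+2) + (5 + (m*(9*size s+11)+1) + (2 + (10*m+3)))))%N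
  (fun st => pc st = (37 + H Pf)%N /\ nreg st 0 = size Cf /\
     forall q, q < size Cf -> emem st q = nth (@Order.bottom d T) Cf q).
  apply: RE_seq; first exact: (setup_main (X0 Pf) (@nthS Pf) Hn).
  move=> st0 [Hpc0 [Hn0 [He0 [Hnm0 [H10 Hem0]]]]].
  apply: RE_seq.
    apply: (sim_run (n := size s) (s := s) Hh).
    split; first by rewrite Hpc0 /= min0n.
    split; first exact: Hn0. split; first exact: He0. split; first exact: Hnm0.
    split; first by move=> j; case: (Hem0 j). split; first exact: H10.
    by move=> j _; case: (Hem0 j).
  move=> [p2 nr2 er2 nm2 em2] /= [-> [/= Hn2 [/= He2 [/= Hnm2 [/= Hem2 [/= H12 Hodd2]]]]]].
  have Hm2 : nr2 0 = m by rewrite Hn2.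
  have := ph3_main (X0 Pf) (nthPm Pf) er2 H12 Hm2 Hodd2.
  have -> : Cs s em2 m = Cf.
    rewrite /Cs /Cf /F /output /mkseq filter_map -/m.
    have e1 : (fun j => em2 (j+j)%N) =1 emem stf by move=> j; rewrite Hem2.
    rewrite (eq_map e1); congr map; apply: eq_filter => j.
    by rewrite /fl /= Hem2 JJ0.
  by [].
case: R => st3 [k3 [Hk3 [R3 [Hpc3 [Hr3 Hem3]]]]].
have out3 : output st3 = Cf.
  rewrite /output Hr3; apply: (@eq_from_nth _ (@Order.bottom d T)); rewrite size_mkseq // => q Hq.
  by rewrite nth_mkseq // Hem3.
have cardF : #|` f [fset x | x in s]| = m by rewrite -EF card_fseq undup_id.
have botF : (@Order.bottom d T) \in F.
  have := fsubsetP (Hcl [fset x | x in s]) _ (bot_cl s).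
  by rewrite -EF inE.
have m1 : 0 < m by rewrite -sizeF; case: (F) botF.
exists k3, st3; split.
  rewrite cardS cardF; apply: (leq_trans Hk3).
  have h1 : size s <= m * size s by rewrite leq_pmull.
  have h2 : m <= m * size s by rewrite leq_pmulr.
  nia.
split.
  apply/halts_runs; split=> //.
  by case: st3 Hpc3 {R3 Hr3 Hem3 out3} => p3 nr3 er3 nm3 em3 /= ->; rewrite /step (nthPm Pf 37).
split; first by rewrite out3 filter_uniq.
apply/fsetP => y; rewrite out3 !inE /= mem_filter clos_mem.
case E: (Jy s y == y) => /=.
  have : y \in closure_set [fset x | x in s] by rewrite clos_mem eq_sym E.
  move/(fsubsetP (Hcl _)); rewrite -EF inE => ->.
  by rewrite eq_sym E.
by rewrite eq_sym E.
Qed.
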